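(* Let $q\in\mathbb{C}^\times$ be not a root of unity, $\varphi\in\mathbb{C}[x]^{\langle0\rangle}$, and let $v_0$ be a highest weight vector of the $U_q(\mathfrak{sl}_2^{\langle0\rangle}[x])$-module $L(\mathbf{u}^{\langle0\rangle}(\varphi))$. Then, as formal power series in $w$, $$\Psi^+(w)\cdot v_0=\beta_\varphi q^{\deg\varphi}\frac{\varphi^\flat(q^{-2}w)}{\varphi^\flat(w)}v_0.$$
   Context: $[k]=(q^k-q^{-k})/(q-q^{-1})$, $[x,y]=xy-yx$. $U_q(\mathfrak{sl}_2^{\langle0\rangle}[x])$ is the $\mathbb{C}$-algebra with generators $X^\pm_t,J_t$ ($t\ge0$), $K^\pm$ and relations: $K^+$ and all $J_t$ pairwise commute; $K^+K^-=1=K^-K^+$; $(K^-)^2=1-(q-q^{-1})J_0$; $X^\pm_{t+1}X^\pm_s-q^{\pm2}X^\pm_sX^\pm_{t+1}=q^{\pm2}X^\pm_tX^\pm_{s+1}-X^\pm_{s+1}X^\pm_t$; $K^+X^\pm_tK^-=q^{\pm2}X^\pm_t$; $q^{\pm2}J_0X^\pm_t-q^{\mp2}X^\pm_tJ_0=\pm[2]X^\pm_t$; $[J_{s+1},X^\pm_t]=q^{\pm2}J_sX^\pm_{t+1}-q^{\mp2}X^\pm_{t+1}J_s$; $[X^+_t,X^-_s]=K^+J_{s+t}$. $\Psi^+_0=K^+$, $\Psi^+_t=(q-q^{-1})K^+J_t$ ($t>0$), $\Psi^+(w)=\sum_{t\ge0}\Psi^+_tw^t$. $L(\mathbf{u})$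 for $\mathbf{u}=(\lambda,(u_t)_{t>0})$ is the simple module generated by $v_0$ with $X^+_tv_0=0$, $K^+v_0=\lambda v_0$, $J_tv_0=u_tv_0$ ($t>0$). $p_t(q)(x_1,\dots,x_k)=\sum_{\lambda\vdash t,\ell(\lambda)\le k}q^{-\ell(\lambda)}(q-q^{-1})^{\ell(\lambda)-1}m_\lambda(x_1,\dots,x_k)$. $\mathbb{C}[x]^{\langle0\rangle}$ is the set of $\varphi=\beta_\varphi(x-\gamma_1)\cdots(x-\gamma_k)$ with $\beta_\varphi=\pm1$; $\mathbf{u}^{\langle0\rangle}(\varphi)=(\beta_\varphi,(0)_{t>0})$ if $k=0$, $(\beta_\varphi q^k,(p_t(q)(\gamma_1,\dots,\gamma_k))_{t>0})$ if $k>0$. $\varphi^\flat(w)=(1-\gamma_1w)\cdots(1-\gamma_kw)$. *)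

(* Defs.v *)
From HB Require Import structures.
From mathcomp Require Import all_boot all_order all_algebra.
From mathcomp Require Import complex.
From mathcomp Require Import reals.
Set Implicit Arguments. Unset Strict Implicit. Unset Printing Implicit Defensive.
Import Order.TTheory GRing.Theory Num.Theory.
Local Open Scope ring_scope.

Section Defs.
Variable C : fieldType.

Definition qint (q : C) (k : nat) : C := (q ^+ k - q ^- k) / (q - q^-1).

Variable V : lmodType C.

(* (Xp, Xm, J, Kp, Km) define a U_q(sl_2^<0>[x])-module structure on V:
   Xp t = X^+_t, Xm t = X^-_t, J t = J_t, Kp = K^+, Km = K^-. *)
Definition is_Uq_module (q : C) (Xp Xm J : nat -> {linear V -> V})
    (Kp Km : {linear V -> V}) : Prop :=
  (forall t v, Kp (J t v) = J t (Kp v)) /\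
  (forall s t v, J s (J t v) = J t (J s v)) /\
  (forall v, Kp (Km v) = v) /\ (forall v, Km (Kp v) = v) /\
  (forall v, Km (Km v) = v - (q - q^-1) *: J 0%N v) /\
  (forall t s v, Xp t.+1 (Xp s v) - q ^+ 2 *: Xp s (Xp t.+1 v)
                 = q ^+ 2 *: Xp t (Xp s.+1 v) - Xp s.+1 (Xp t v)) /\
  (forall t s v, Xm t.+1 (Xm s v) - q ^- 2 *: Xm s (Xm t.+1 v)
                 = q ^- 2 *: Xm t (Xm s.+1 v) - Xm s.+1 (Xm t v)) /\
  (forall t v, Kp (Xp t (Km v)) = q ^+ 2 *: Xp t v) /\
  (forall t v, Kp (Xm t (Km v)) = q ^- 2 *: Xm t v) /\
  (forall t v, q ^+ 2 *: J 0%N (Xp t v) - q ^- 2 *: Xp t (J 0%N v)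
               = qint q 2 *: Xp t v) /\
  (forall t v, q ^- 2 *: J 0%N (Xm t v) - q ^+ 2 *: Xm t (J 0%N v)
               = - (qint q 2 *: Xm t v)) /\
  (forall s t v, J s.+1 (Xp t v) - Xp t (J s.+1 v)
                 = q ^+ 2 *: J s (Xp t.+1 v) - q ^- 2 *: Xp t.+1 (J s v)) /\
  (forall s t v, J s.+1 (Xm t v) - Xm t (J s.+1 v)
                 = q ^- 2 *: J s (Xm t.+1 v) - q ^+ 2 *: Xm t.+1 (J s v)) /\
  (forall t s v, Xp t (Xm s v) - Xm s (Xp t v) = Kp (J (s + t)%N v)).

Definition is_submodule (Xp Xm J : nat -> {linear V -> V})
    (Kp Km : {linear V -> V}) (W : V -> Prop) : Prop :=
  W 0 /\ (forall u v, W u -> W v -> W (u + v)) /\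
  (forall (a : C) v, W v -> W (a *: v)) /\
  (forall t v, W v -> W (Xp t v)) /\ (forall t v, W v -> W (Xm t v)) /\
  (forall t v, W v -> W (J t v)) /\
  (forall v, W v -> W (Kp v)) /\ (forall v, W v -> W (Km v)).

Definition simple_module (Xp Xm J : nat -> {linear V -> V})
    (Kp Km : {linear V -> V}) : Prop :=
  (exists v : V, v != 0) /\
  forall W, is_submodule Xp Xm J Kp Km W ->
    (forall v, W v -> v = 0) \/ (forall v, W v).

Definition Psi_plus (q : C) (Kp : {linear V -> V}) (J : nat -> {linear V -> V})
    (t : nat) (v : V) : V :=
  if t == 0%N then Kp v else (q - q^-1) *: Kp (J t v).

End Defs.

Section Sym.
Variable C : fieldType.

Definition is_partition (lam : seq nat) (t : nat) : bool :=
  [&& sorted geq lam, all (fun i => 0 < i)%N lam & sumn lam == t].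

(* monomial symmetric polynomial m_lam(x_1,...,x_k), xs = [x_1;...;x_k]:
   sum of x^alpha over the distinct rearrangements alpha of lam (padded with 0) *)
Definition mono_sym (lam : seq nat) (xs : seq C) : C :=
  \sum_(a : {ffun 'I_(size xs) -> 'I_(sumn lam).+1} |
          sort geq [seq i <- [seq val (a j) | j <- enum 'I_(size xs)] | (0 < i)%N]
          == lam)
    \prod_(j < size xs) xs`_j ^+ a j.

Definition ppoly (q : C) (t : nat) (xs : seq C) : C :=
  \sum_(l < (size xs).+1)
    \sum_(s : l.-tuple 'I_t.+1 | is_partition (map val s) t)
      q ^- l * (q - q^-1) ^+ l.-1 * mono_sym (map val s) xs.

Definition phi (beta : C) (gs : seq C) : {poly C} :=
  beta *: \prod_(g <- gs) ('X - g%:P).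

Definition uvec (q beta : C) (gs : seq C) : C * (nat -> C) :=
  if gs is [::] then (beta, fun _ => 0)
  else (beta * q ^+ size gs, fun t => ppoly q t gs).

Definition phi_flat (gs : seq C) : {poly C} := \prod_(g <- gs) (1 - g *: 'X).

(* formal power series in w, as coefficient sequences *)
Definition ps_mul (f g : nat -> C) (n : nat) : C :=
  \sum_(i < n.+1) f i * g (n - i)%N.

Fixpoint ps_inv_seq (f : nat -> C) (n : nat) : seq C :=
  match n with
  | 0 => [:: (f 0%N)^-1]
  | n'.+1 => let s := ps_inv_seq f n' in
      rcons s (- (f 0%N)^-1 * \sum_(j < n'.+1) f j.+1 * nth 0 s (n' - j)%N)
  end.

Definition ps_inv (f : nat -> C) (n : nat) : C := nth 0 (ps_inv_seq f n) n.

(* coefficients of beta q^{deg phi} phi^flat(q^-2 w) / phi^flat(w) *)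
Definition rhs_series (q beta : C) (gs : seq C) (n : nat) : C :=
  beta * q ^+ (size (phi beta gs)).-1 *
  ps_mul (fun m => (phi_flat gs)`_m * (q ^- 2) ^+ m)
         (ps_inv (fun m => (phi_flat gs)`_m)) n.

End Sym.

(* Main.v *)
Require Import Defs.
From HB Require Import structures.
From mathcomp Require Import all_boot all_order all_algebra.
From mathcomp Require Import complex.
From mathcomp Require Import reals.
From mathcomp Require Import ring.
Set Implicit Arguments. Unset Strict Implicit. Unset Printing Implicit Defensive.
Import Order.TTheory GRing.Theory Num.Theory.
Local Open Scope ring_scope.

Section PS.
Variable F : fieldType.

Definition eqmod (n : nat) (p r : {poly F}) := forall m, (m < n)%N -> p`_m = r`_m.

Lemma eqmodM n p p' r r' : eqmod n p p' -> eqmod n r r' -> eqmod n (p * r) (p' * r').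
Proof.
move=> Hp Hr m Hm; rewrite !coefM; apply: eq_bigr => i _.
have hi : (i < n)%N by apply: leq_ltn_trans Hm; rewrite -ltnS.
have hmi : (m - i < n)%N by apply: leq_ltn_trans Hm; apply: leq_subr.
by rewrite Hp // Hr.
Qed.

Lemma eqmod_trans n p r s : eqmod n p r -> eqmod n r s -> eqmod n p s.
Proof. by move=> H1 H2 m Hm; rewrite H1 // H2. Qed.

Lemma eqmod_sym n p r : eqmod n p r -> eqmod n r p.
Proof. by move=> H m Hm; rewrite H. Qed.

Lemma eqmod_refl n p : eqmod n p p.
Proof. by []. Qed.

Lemma eqmod_prod n (I : Type) (r : seq I) (P Q : I -> {poly F}) :
  (forall i, eqmod n (P i) (Q i)) -> eqmod n (\prod_(i <- r) P i) (\prod_(i <- r) Q i).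
Proof.
move=> H; elim/big_rec2: _ => [|i y1 y2 _ Hy]; first exact: eqmod_refl.
exact: eqmodM.
Qed.

Lemma size_ps_inv_seq (f : nat -> F) n : size (ps_inv_seq f n) = n.+1.
Proof. by elim: n => [|n IH] //=; rewrite size_rcons IH. Qed.

Lemma nth_ps_inv_seq (f : nat -> F) n i : (i <= n)%N -> nth 0 (ps_inv_seq f n) i = ps_inv f i.
Proof.
elim: n => [|n IH]; first by rewrite leqn0 => /eqP ->.
rewrite leq_eqVlt => /orP [/eqP -> //|Hi].
by rewrite /= nth_rcons size_ps_inv_seq Hi IH.
Qed.

Lemma ps_inv_S (f : nat -> F) n :
  ps_inv f n.+1 = - (f 0%N)^-1 * \sum_(j < n.+1) f j.+1 * ps_inv f (n - j)%N.
Proof.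
rewrite /ps_inv /= nth_rcons size_ps_inv_seq ltnn eqxx.
congr (_ * _); apply: eq_bigr => j _; rewrite nth_ps_inv_seq //; exact: leq_subr.
Qed.

Lemma ps_inv_0 (f : nat -> F) : ps_inv f 0 = (f 0%N)^-1.
Proof. by []. Qed.

Lemma ps_mul_inv (f : nat -> F) n : f 0%N != 0 ->
  ps_mul f (ps_inv f) n = (n == 0%N)%:R.
Proof.
move=> hf; case: n => [|n].
  by rewrite /ps_mul big_ord1 subn0 ps_inv_0 mulfV.
rewrite /ps_mul big_ord_recl subn0 ps_inv_S mulrA mulrN mulfV // mulN1r.
rewrite /=; apply/eqP; rewrite addrC subr_eq0; apply/eqP.
by apply: eq_bigr => j _; rewrite /bump /= add1n subSS.
Qed.

End PS.
Section PS2.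
Variable F : fieldType.

Definition gfun (s g : F) (m : nat) : F := if m == 0%N then 1 else (1 - s) * g ^+ m.

Lemma factor_eq (g s : F) t :
  eqmod t.+1 ((1 - g *: 'X) * \poly_(m < t.+1) gfun s g m) (1 - (s * g) *: 'X).
Proof.
move=> m Hm.
rewrite mulrBl mul1r -scalerAl coefB coefZ coefXM !coef_poly coefB coef1 coefZ coefX Hm.
case: m Hm => [|[|m]] Hm /=; rewrite /gfun /=.
- by rewrite !mulr0 !subr0.
- rewrite expr1 !mulr1; ring.
- rewrite (ltnW Hm) exprS; ring.
Qed.

Lemma coef_scaleX (gs : seq F) (s : F) m :
  (\prod_(g <- gs) (1 - g *: 'X))`_m * s ^+ m = (\prod_(g <- gs) (1 - (s * g) *: 'X))`_m.
Proof.
elim: gs m => [|g gs IH] m.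
  by rewrite !big_nil coef1; case: m => [|m] /=; [rewrite expr0 mulr1 | rewrite mul0r].
rewrite !big_cons !mulrBl !mul1r !coefB -!scalerAl !coefZ !coefXM.
case: m => [|m] /=; first by rewrite !mulr0 !subr0 -(IH 0%N).
by rewrite -(IH m.+1) -(IH m) exprS; ring.
Qed.

Lemma coef0_flat (gs : seq F) : (\prod_(g <- gs) (1 - g *: 'X))`_0 = 1.
Proof.
rewrite coef0_prod big1 // => g _.
by rewrite coefB coef1 coefZ coefX mulr0 subr0.
Qed.

Lemma series_main (gs : seq F) (s : F) t :
  ps_mul (fun m => (\prod_(g <- gs) (1 - g *: 'X))`_m * s ^+ m)
         (ps_inv (fun m => (\prod_(g <- gs) (1 - g *: 'X))`_m)) t
  = (\prod_(j < size gs) \poly_(m < t.+1) gfun s gs`_j m)`_t.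
Proof.
set B := \prod_(g <- gs) (1 - g *: 'X).
set A := \prod_(g <- gs) (1 - (s * g) *: 'X).
set I := ps_inv (fun m => B`_m).
set G := \prod_(j < size gs) \poly_(m < t.+1) gfun s gs`_j m.
set Ip := \poly_(i < t.+1) I i.
have HB0 : B`_0 = 1 by exact: coef0_flat.
have HBI : eqmod t.+1 (B * Ip) 1.
  move=> m Hm; rewrite coefM coef1.
  have := @ps_mul_inv _ (fun m => B`_m) m; rewrite HB0 oner_neq0 => /(_ isT) <-.
  apply: eq_bigr => i _; rewrite coef_poly.
  by rewrite (leq_ltn_trans (leq_subr i m) Hm).
have HG : eqmod t.+1 (B * G) A.
  rewrite /B /A /G (big_nth 0) big_mkord (big_nth 0) big_mkord.
  rewrite -big_split /=; apply: eqmod_prod => j; exact: factor_eq.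
have -> : ps_mul (fun m => B`_m * s ^+ m) I t = (A * Ip)`_t.
  rewrite coefM; apply: eq_bigr => i _.
  by rewrite coef_scaleX coef_poly (leq_ltn_trans (leq_subr i t) (ltnSn t)).
have E : eqmod t.+1 (A * Ip) (G * 1).
    have -> : G * 1 = B * G * Ip * 1 + G * (1 - B * Ip) by ring.
    rewrite mulr1.
    move=> m Hm; rewrite coefD.
    have H1 := eqmodM (eqmod_sym HG) (@eqmod_refl _ t.+1 Ip) Hm.
    have H2 := eqmodM (@eqmod_refl _ t.+1 G) (eqmod_sym HBI) Hm.
    by rewrite H1 mulrBr coefB H2 subrr addr0.
by rewrite (E t (ltnSn t)) mulr1.
Qed.
End PS2.
Section Comb.
Variable F : fieldType.

Definition key k n (a : {ffun 'I_k -> 'I_n}) : seq nat :=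
  sort geq [seq i <- [seq val (a j) | j <- enum 'I_k] | (0 < i)%N].

Definition mono' n (lam : seq nat) (xs : seq F) : F :=
  \sum_(a : {ffun 'I_(size xs) -> 'I_n.+1} | key a == lam)
    \prod_(j < size xs) xs`_j ^+ a j.

Lemma mono_eq lam n xs : sumn lam = n -> Defs.mono_sym lam xs = mono' n lam xs.
Proof. by move=> <-. Qed.

Lemma mem_le_sumn (lam : seq nat) x : x \in lam -> (x <= sumn lam)%N.
Proof.
elim: lam => [|y lam IH] //=; rewrite inE => /orP [/eqP ->|/IH H].
  exact: leq_addr.
by apply: (leq_trans H); exact: leq_addl.
Qed.

Lemma inner l (lam : seq nat) t (x : F) :
  \sum_(s : l.-tuple 'I_t.+1 | is_partition (map val s) t && (lam == map val s)) x
  = if (size lam == l) && is_partition lam t then x else 0.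
Proof.
case: ifP => [/andP [/eqP Hl Hp]|Hn].
  subst l.
  set s0 : (size lam).-tuple 'I_t.+1 := map_tuple (fun i => inord i) (in_tuple lam).
  have Hs0 : map val s0 = lam.
    rewrite /= -map_comp; apply: map_id_in => i Hi /=; rewrite inordK // ltnS.
    move: Hp => /and3P [_ _ /eqP <-]; exact: mem_le_sumn.
  rewrite (big_pred1 s0) // => s /=.
  apply/andP/eqP => [[_ /eqP H]|->]; last by rewrite Hs0 Hp eqxx.
  apply: val_inj; apply: (inj_map val_inj); by rewrite Hs0 -H.
rewrite big_pred0 // => s; apply/negbTE/andP => [[Hp /eqP H]].
by move: Hn; rewrite H size_map size_tuple eqxx Hp.
Qed.

Definition w (q : F) (l : nat) : F := q ^- l * (q - q^-1) ^+ l.-1.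

Lemma sum_sel k (lam : seq nat) t (G : nat -> F) : (size lam <= k)%N ->
  \sum_(l < k.+1) (if (size lam == l) && is_partition lam t then G l else 0)
  = if is_partition lam t then G (size lam) else 0.
Proof.
move=> Hk; case: (is_partition lam t); last by rewrite big1 // => l _; rewrite andbF.
have Hlt : (size lam < k.+1)%N by [].
rewrite (bigD1 (Ordinal Hlt)) //= eqxx big1 ?addr0 // => i Hi.
rewrite andbT; case: eqP => // E; move: Hi.
by rewrite (_ : i = Ordinal Hlt) ?eqxx //; apply: val_inj; rewrite /= E.
Qed.

Lemma size_key k n (a : {ffun 'I_k -> 'I_n}) : (size (key a) <= k)%N.
Proof.
rewrite /key size_sort size_filter.
by apply: leq_trans (count_size _ _) _; rewrite size_map size_enum_ord.
Qed.

Lemma ppoly_eq q t xs : ppoly q t xs =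
  \sum_(a : {ffun 'I_(size xs) -> 'I_t.+1})
     (if is_partition (key a) t then w q (size (key a)) else 0) *
     \prod_(j < size xs) xs`_j ^+ a j.
Proof.
rewrite /ppoly.
transitivity (\sum_(l < (size xs).+1) \sum_(a : {ffun 'I_(size xs) -> 'I_t.+1})
  (\sum_(s : l.-tuple 'I_t.+1 | is_partition (map val s) t && (key a == map val s)) w q l) *
     \prod_(j < size xs) xs`_j ^+ a j).
  apply: eq_bigr => l _.
  rewrite (eq_bigr (fun s : l.-tuple 'I_t.+1 => \sum_(a : {ffun 'I_(size xs) -> 'I_t.+1} | key a == map val s) w q l * \prod_(j < size xs) xs`_j ^+ a j)); last first.
    move=> s Hs; rewrite (@mono_eq _ t); last by move: Hs => /and3P [_ _ /eqP].
    by rewrite /mono' mulr_sumr.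
  rewrite (exchange_big_dep predT) //=; apply: eq_bigr => a _; by rewrite mulr_suml.
rewrite exchange_big; apply: eq_bigr => a _; rewrite -mulr_suml; congr (_ * _).
rewrite (eq_bigr (fun l : 'I_(size xs).+1 => if (size (key a) == l) && is_partition (key a) t then w q l else 0)); last by move=> l _; exact: inner.
exact: sum_sel (size_key a).
Qed.

End Comb.
Section Comb2.
Variable F : fieldType.

Lemma coef_prod_poly k t (h : 'I_k -> nat -> F) :
  (\prod_(j < k) \poly_(m < t.+1) h j m)`_t =
  \sum_(a : {ffun 'I_k -> 'I_t.+1}) (\prod_j h j (a j)) * ((\sum_j (a j : nat))%N == t)%:R.
Proof.
rewrite (eq_bigr (fun j => \sum_(m < t.+1) (h j m)%:P * 'X^m)); last first.
  by move=> j _; rewrite poly_def; apply: eq_bigr => m _; rewrite mul_polyC.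
rewrite bigA_distr_bigA coef_sum; apply: eq_bigr => a _.
by rewrite big_split /= -rmorph_prod prodrXr coefCM coefXn eq_sym.
Qed.

Lemma sumn_filter_pos (s : seq nat) : sumn [seq i <- s | (0 < i)%N] = sumn s.
Proof. by elim: s => [|[|x] s IH] //=; rewrite IH. Qed.

Lemma sumn_key k n (a : {ffun 'I_k -> 'I_n}) : sumn (key a) = (\sum_j (a j : nat))%N.
Proof.
rewrite /key (perm_sumn (permEl (perm_sort _ _))) sumn_filter_pos sumnE big_map.
by rewrite big_enum.
Qed.

Lemma part_key k n t (a : {ffun 'I_k -> 'I_n}) :
  is_partition (key a) t = ((\sum_j (a j : nat))%N == t).
Proof.
by rewrite /is_partition -sumn_key sort_sorted ?all_sort ?filter_all //.
Qed.

Lemma size_key_count k n (a : {ffun 'I_k -> 'I_n}) :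
  size (key a) = count (fun j => (a j : nat) != 0%N) (enum 'I_k).
Proof.
rewrite /key size_sort size_filter count_map; apply: eq_count => j /=.
by rewrite lt0n.
Qed.

Lemma gfun_prod (I : Type) (r : seq I) s (h : I -> F) (e : I -> nat) :
  \prod_(j <- r) gfun s (h j) (e j) =
  (1 - s) ^+ count (fun j => e j != 0%N) r * \prod_(j <- r) h j ^+ e j.
Proof.
elim: r => [|j r IH]; first by rewrite !big_nil mulr1.
rewrite !big_cons IH /gfun /=; case: eqP => [->|_] /=.
  by rewrite add0n expr0 !mul1r.
by rewrite exprS; ring.
Qed.

Lemma comb (q : F) (hq : q != 0) t gs : (0 < t)%N ->
  (q - q^-1) * ppoly q t gs =
  (\prod_(j < size gs) \poly_(m < t.+1) gfun (q ^- 2) gs`_j m)`_t.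
Proof.
move=> ht; rewrite ppoly_eq coef_prod_poly mulr_sumr; apply: eq_bigr => a _.
rewrite part_key mulrA.
have -> : \prod_(j < size gs) gfun (q ^- 2) gs`_j (a j) =
   (1 - q ^- 2) ^+ size (key a) * \prod_(j < size gs) gs`_j ^+ a j.
  by rewrite -big_enum /= gfun_prod size_key_count big_enum.
case: eqP => [Hs|_]; last by rewrite mulr0 mul0r mulr0.
rewrite mulr1; congr (_ * _).
have : (0 < size (key a))%N.
  by rewrite lt0n size_eq0; apply/eqP => H; move: Hs; rewrite -sumn_key H => E; rewrite -E in ht.
case: (size (key a)) => [|l] // _.
rewrite /w /= -exprVn.
have -> : 1 - q ^- 2 = q^-1 * (q - q^-1) by field.
rewrite exprMn exprS [(q - q^-1) ^+ l.+1]exprS; ring.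
Qed.

End Comb2.

Lemma ppoly_nil (C : fieldType) (q : C) t : (0 < t)%N -> ppoly q t [::] = 0.
Proof.
move=> ht; rewrite /ppoly big_ord1 big_pred0 // => s.
rewrite (tuple0 s) /is_partition /= eq_sym.
by move: ht; rewrite lt0n => /negbTE ->.
Qed.

Lemma uvec1 (C : fieldType) (q beta : C) gs : (uvec q beta gs).1 = beta * q ^+ size gs.
Proof. by case: gs => [|g gs] //=; rewrite expr0 mulr1. Qed.

Lemma uvec2 (C : fieldType) (q beta : C) gs :
  forall t, (0 < t)%N -> (uvec q beta gs).2 t = ppoly q t gs.
Proof. by move=> t ht; case: gs => [|g gs] //=; rewrite ppoly_nil. Qed.

Theorem mainTheorem10 (R : realType) (q : R[i]) (hq0 : q != 0)
  (hq : forall n : nat, (0 < n)%N -> q ^+ n != 1)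
  (beta : R[i]) (hbeta : beta = 1 \/ beta = -1) (gs : seq R[i])
  (V : lmodType R[i]) (Xp Xm J : nat -> {linear V -> V}) (Kp Km : {linear V -> V})
  (HV : is_Uq_module q Xp Xm J Kp Km)
  (Hsimple : simple_module Xp Xm J Kp Km)
  (v0 : V) (hv0 : v0 != 0)
  (hX : forall t : nat, Xp t v0 = 0)
  (hK : Kp v0 = (uvec q beta gs).1 *: v0)
  (hJ : forall t : nat, (0 < t)%N -> J t v0 = (uvec q beta gs).2 t *: v0) :
  forall t : nat, Psi_plus q Kp J t v0 = rhs_series q beta gs t *: v0.
Proof.
have Hlam := uvec1 q beta gs.
have Hu := uvec2 q beta gs.
have hb : beta != 0 by case: hbeta => ->; rewrite ?oppr_eq0 oner_neq0.
have Hsz : (size (phi beta gs)).-1 = size gs.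
  by rewrite /phi size_scale // size_prod_XsubC.
move=> t; rewrite /Psi_plus /rhs_series Hsz.
case: t => [|t] /=.
  rewrite hK Hlam /ps_mul big_ord1 /ps_inv /= /phi_flat coef0_flat expr0 invr1 !mulr1.
  done.
rewrite hJ // linearZ /= hK Hlam Hu // scalerA scalerA /phi_flat series_main -comb //.
congr (_ *: _); ring.
Qed.
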